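(* Let $G$ be a connected graph with $\delta(G)=1$ and girth at least $15$. If $G\in\mathcal U$, then every vertex $v$ with $d_G(v,S_G)=2$ has exactly one single star support vertex at distance exactly $2$ from $v$.
   Context: All graphs are finite and simple. A set $P\subseteq V(G)$ is an open packing if no two distinct vertices of $P$ have a common neighbor; it is maximal if maximal under inclusion among open packings. $\rho^o(G)$ is the maximum size of an open packing and $\rho^o_L(G)$ the minimum size of a maximal open packing; $\mathcal U$ is the class of graphs with $\rho^o_L(G)=\rho^o(G)$. A leaf is a vertex of degree $1$; a support vertex is a vertex adjacent to at least one leaf; $S_G$ is the set of support vertices and $d_G(v,S_G)=\min_{s\in S_G}d_G(v,s)$. A single star support vertex is a support vertex not adjacent to any other support vertex. *)

(* Defs.v *)
(* A simple graph = symmetric irreflexive relation e on a finType T. *)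
From mathcomp Require Import all_boot.
Set Implicit Arguments. Unset Strict Implicit. Unset Printing Implicit Defensive.

Section Graph.
Variables (T : finType) (e : rel T).

Definition nbhd (x : T) : {set T} := [set y | e x y].
Definition deg (x : T) : nat := #|nbhd x|.

Definition open_packing (P : {set T}) : bool :=
  [forall x in P, forall y in P, (x != y) ==> [disjoint nbhd x & nbhd y]].

Definition maximal_open_packing (P : {set T}) : bool :=
  open_packing P &&
  [forall Q : {set T}, (open_packing Q && (P \subset Q)) ==> (Q == P)].

Definition rho_o : nat := \max_(P : {set T} | open_packing P) #|P|.

(* rho^o_L : minimum size of a maximal open packing
   (the empty set is an open packing, so maximal ones exist) *)
Definition rho_oL : nat :=
  \big[minn/#|T|]_(P : {set T} | maximal_open_packing P) #|P|.

Definition in_U : Prop := rho_oL = rho_o.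

Definition leaf (x : T) : bool := deg x == 1.
Definition support (s : T) : bool := [exists y, e s y && leaf y].
Definition single_star_support (s : T) : bool :=
  support s && [forall t, e s t ==> ~~ support t].

Definition min_deg_one : Prop := (forall x, 1 <= deg x) /\ (exists x, deg x = 1).

Definition connected_graph : Prop := forall x y, connect e x y.

Definition girth_at_least (g : nat) : Prop :=
  forall c : seq T, ucycle e c -> 3 <= size c -> g <= size c.

Definition walk_len (x y : T) (k : nat) : Prop :=
  exists p : seq T, [&& path e x p, last x p == y & size p == k].

Definition dist_is (x y : T) (k : nat) : Prop :=
  walk_len x y k /\ forall m, m < k -> ~ walk_len x y m.

Definition dist_to_supports_is (v : T) (k : nat) : Prop :=
  (exists s, support s /\ dist_is v s k) /\
  (forall s, support s -> forall m, m < k -> ~ walk_len v s m).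

End Graph.

(* Main.v *)
Require Import Defs.
From mathcomp Require Import all_boot zify.
Set Implicit Arguments. Unset Strict Implicit. Unset Printing Implicit Defensive.


Section Walks.
Variables (T : finType) (e : rel T).
Hypothesis e_sym : symmetric e.
Hypothesis e_irr : irreflexive e.
Hypothesis gir : girth_at_least e 15.

Fixpoint nb (s : seq T) : bool :=
  match s with
  | a :: ((b :: c :: _) as s') => (a != c) && nb s'
  | _ => true
  end.

Lemma nb3 a b c s : nb [:: a, b, c & s] = (a != c) && nb [:: b, c & s].
Proof. by []. Qed.

Lemma nb_behead x s : nb (x :: s) -> nb s.
Proof. by case: s => [|y [|z s]] // /andP[]. Qed.

Lemma nb_catr s t : nb (s ++ t) -> nb t.
Proof. elim: s => //= x s IH H; apply: IH; exact: nb_behead H. Qed.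

Lemma nb_catl s t : nb (s ++ t) -> nb s.
Proof.
elim: s => // x s IH. case: s IH => [|y [|z s]] IH //.
rewrite !cat_cons nb3 => /andP[H1 H2]; rewrite nb3 H1 /=; exact: IH H2.
Qed.

Definition third (x : T) (s : seq T) := if s is _ :: z :: _ then x != z else true.

Lemma nb_cons x s : nb (x :: s) = third x s && nb s.
Proof. by case: s => [|y [|z s]]. Qed.

Lemma third_cat x s a b r : third x (rcons s a ++ b :: r) = third x (rcons s a ++ [:: b]).
Proof. by case: s => [|z [|w s]]. Qed.

Lemma nb_join s a b y t : nb (rcons (rcons s a) b) -> nb [:: b, y & t] -> a != y ->
  nb (rcons s a ++ [:: b, y & t]).
Proof.
elim: s => [|x s IH].
  by move=> _ H1 H2; rewrite cat1s nb_cons H1 andbT.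
rewrite rcons_cons rcons_cons cat_cons => H H2 H3; move: H.
rewrite nb_cons => /andP[H0 H1].
by rewrite nb_cons third_cat cats1 H0 IH.
Qed.

Lemma nb_rev s : nb s -> nb (rev s).
Proof.
elim: s => [|x s IH] //.
case: s IH => [|y [|z s]] IH //.
rewrite nb3 => /andP[Hxz H].
have := IH H; rewrite !rev_cons => H'.
rewrite -cats1 -(cats1 _ y) -catA cat1s.
apply: nb_join => //. by rewrite eq_sym.
Qed.

Lemma notuniq_split (s : seq T) : ~~ uniq s -> exists p1 y p2 p3, s = p1 ++ y :: p2 ++ y :: p3.
Proof.
elim: s => // z s IH /=. rewrite negb_and negbK => /orP [zin | nu].
  case/splitPr: zin => p q. by exists [::], z, p, q.
case: (IH nu) => p1 [y [p2 [p3 ->]]]. by exists (z :: p1), y, p2, p3.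
Qed.

Definition wk (l : seq T) := if l is z :: l' then path e z l' else true.

Lemma wk_cat l1 l2 : wk (l1 ++ l2) -> wk l1 /\ wk l2.
Proof.
case: l1 => [|z l1] //=. rewrite cat_path => /andP[-> H]; split => //.
by case: l2 H => [|w l2] //= /andP[].
Qed.

Lemma NB n x l : size l <= n -> path e x l -> last x l = x -> nb (x :: l) -> 0 < size l < 15 -> False.
Proof.
elim: n x l => [|n IH] x l; first by case: l.
case/lastP: l => [|s z] //. rewrite last_rcons size_rcons => Hsz Hp Hz; subst z.
move=> Hnb /andP[_ H15].
case Hu: (uniq (x :: s)).
  have Hc : ucycle e (x :: s) by rewrite /ucycle Hu andbT.
  case: (ltnP (size (x :: s)) 3) => H3.
    case: s Hp Hnb H3 {Hsz H15 Hc Hu} => [|y [|w s]] //=.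
      by rewrite e_irr.
    by rewrite eqxx.
  by have := gir Hc H3; rewrite /= leqNgt H15.
have [p1 [y [p2 [p3 E]]]] := notuniq_split (negbT Hu).
have E2 : x :: rcons s x = p1 ++ (y :: rcons p2 y) ++ rcons p3 x.
  rewrite -rcons_cons E rcons_cat rcons_cons rcons_cat /=.
by rewrite cat_rcons.
have Hw : wk (x :: rcons s x) by [].
rewrite E2 in Hw Hnb.
have [_ Hw2] := wk_cat Hw. have [Hw3 _] := wk_cat Hw2.
have Hnb2 := nb_catl (nb_catr Hnb).
have Hs : size (x :: s) = size p1 + size p2 + size p3 + 2.
  by rewrite E size_cat /= size_cat /=; lia.
apply: (IH y (rcons p2 y)) => //.
- rewrite size_rcons. simpl in Hs. lia.
- by rewrite last_rcons.
- rewrite size_rcons /=. simpl in Hs. lia.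
Qed.

Lemma UW n x p p' : size p + size p' <= n -> path e x p -> path e x p' ->
  nb (x :: p) -> nb (x :: p') -> last x p = last x p' -> size p + size p' < 15 -> p = p'.
Proof.
elim: n p p' => [|n IH] p p'.
  by case: p; case: p'.
case/lastP: p => [|p0 b]; case/lastP: p' => [|p0' b'] //.
- move=> _ _ Hp' _ Hn' Hl H15; exfalso.
  apply: (NB (leqnn _) Hp') => //.
  rewrite size_rcons /=; move: H15; rewrite size_rcons /=. lia.
- move=> _ Hp _ Hn _ Hl H15; exfalso.
  apply: (NB (leqnn _) Hp) => //.
  move: H15; rewrite !size_rcons /=. lia.
rewrite !last_rcons => Hs Hp Hp' Hn Hn' Hl H15; subst b'.
case: (eqVneq (last x p0) (last x p0')) => Ha.
  move: (Hp) (Hp'); rewrite !rcons_path => /andP[Hp0 _] /andP[Hp0' _].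
  have Hn0 : nb (x :: p0) by move: Hn; rewrite -rcons_cons -cats1 => /nb_catl.
  have Hn0' : nb (x :: p0') by move: Hn'; rewrite -rcons_cons -cats1 => /nb_catl.
  rewrite (IH p0 p0') //.
    by move: Hs; rewrite !size_rcons; lia.
  by move: H15; rewrite !size_rcons; lia.
exfalso.
have Hr : path e b (rev (x :: p0')).
  have := rev_path e x (rcons p0' b); rewrite last_rcons belast_rcons => ->.
  by rewrite (@eq_path _ _ e) // => y z; rewrite /= e_sym.
apply: (@NB _ x (rcons p0 b ++ rev (x :: p0')) (leqnn _)).
- by rewrite cat_path Hp last_rcons Hr.
- by rewrite last_cat last_rcons rev_cons last_rcons.
- rewrite -cat_cons -rcons_cons (lastI x p0) (lastI x p0') rev_rcons.
  rewrite cat_rcons; apply: nb_join => //.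
  + by rewrite -(lastI x p0) rcons_cons.
  + rewrite -rev_rcons -rev_rcons -(lastI x p0') rcons_cons. exact: nb_rev.
- move: H15; rewrite size_cat size_rev !size_rcons /=. lia.
Qed.

Section Root.
Variable v : T.
Definition W (p : seq T) := path e v p && nb (v :: p).

Lemma UWs p p' : W p -> W p' -> last v p = last v p' -> size p + size p' < 15 -> p = p'.
Proof. move=> /andP[? ?] /andP[? ?] ? ?. exact: (@UW _ v p p' (leqnn _)). Qed.

Lemma W_prefix s y : W (rcons s y) -> W s.
Proof.
rewrite /W rcons_path -rcons_cons -cats1 => /andP[/andP[-> _]].
exact: nb_catl.
Qed.

Lemma W_rcons s y z : W (rcons s y) -> e y z -> z != last v s -> W (rcons (rcons s y) z).
Proof.
rewrite /W rcons_path => /andP[/andP[Hp Hy] Hn] Hz Hne.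
rewrite !rcons_path Hp Hy last_rcons Hz.
rewrite -!rcons_cons (lastI v s).
have -> : forall B a, rcons (rcons (rcons B a) y) z = rcons B a ++ [:: y; z].
  by move=> B a; rewrite -!cats1 -!catA.
apply: nb_join; last by rewrite eq_sym.
  by move: Hn; rewrite -rcons_cons (lastI v s).
by [].
Qed.

Lemma W_ext p y : W p -> e (last v p) y ->
  exists p', [/\ W p', last v p' = y & (size p' = (size p).+1 \/ (size p').+1 = size p)].
Proof.
case/lastP: p => [|s z].
  move=> _ Hy; exists [:: y]; split => //; last by left.
  by rewrite /W /= Hy.
rewrite last_rcons => HW Hy.
case: (eqVneq y (last v s)) => Hne.
  exists s; split; [exact: W_prefix HW | by [] | by right; rewrite size_rcons].
exists (rcons (rcons s z) y); split; [exact: W_rcons | by rewrite last_rcons | by left; rewrite size_rcons].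
Qed.

Lemma W_far pb pr : W pb -> W pr -> size pb + 3 <= size pr -> size pb + size pr + 2 < 15 ->
  (last v pb != last v pr) /\ (forall q, e (last v pb) q -> e (last v pr) q -> False).
Proof.
move=> Hb Hr H3 H15; split.
  apply/eqP => Heq. have := UWs Hb Hr Heq. move=> Hx; move: H3; rewrite Hx. lia.
  lia.
move=> q Hq1 Hq2.
have [p1 [W1 L1 S1]] := W_ext Hb Hq1.
have [p2 [W2 L2 S2]] := W_ext Hr Hq2.
have : p1 = p2 by apply: UWs => //; [by rewrite L1 L2 | lia].
move=> E; subst p2. lia.
Qed.

Lemma W_pair pc pc' q q' r a p : W (rcons (rcons pc q) r) -> W (rcons (rcons pc' q') a) ->
  size pc = size pc' -> size pc <= 4 -> e r p -> e a p -> r != a -> pc = pc'.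
Proof.
move=> H1 H2 Hs H4 Hrp Hap Hra.
have H1' := W_prefix H1. have H2' := W_prefix H2.
case: (eqVneq p q) => Hpq; case: (eqVneq p q') => Hpq'.
- subst p q'. have := UWs H1' H2'. rewrite !last_rcons !size_rcons => E.
  have := E erefl ltac:(lia). by move/rcons_inj => [].
- subst p. have H3 : W (rcons (rcons (rcons pc' q') a) q) by apply: W_rcons; rewrite ?last_rcons.
  have := UWs H1' H3. rewrite !last_rcons !size_rcons => E.
  have := E erefl ltac:(lia). move=> E2; have := congr1 size E2; rewrite !size_rcons. lia.
- subst p. have H3 : W (rcons (rcons (rcons pc q) r) q') by apply: W_rcons; rewrite ?last_rcons.
  have := UWs H3 H2'. rewrite !last_rcons !size_rcons => E.
  have := E erefl ltac:(lia). move=> E2; have := congr1 size E2; rewrite !size_rcons. lia.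
- have H3 : W (rcons (rcons (rcons pc q) r) p) by apply: W_rcons; rewrite ?last_rcons // eq_sym.
  have H4' : W (rcons (rcons (rcons pc' q') a) p) by apply: W_rcons; rewrite ?last_rcons // eq_sym.
  have := UWs H3 H4'. rewrite !last_rcons !size_rcons => E.
  have := E erefl ltac:(lia). move/rcons_inj => [] /rcons_inj [] _ Era.
  by rewrite Era eqxx in Hra.
Qed.

End Root.

End Walks.


Section Graph2.
Variables (T : finType) (e : rel T).
Hypothesis e_sym : symmetric e.
Hypothesis e_irr : irreflexive e.

Definition hadj x y := (x != y) && ~~ [disjoint nbhd e x & nbhd e y].

Lemma commonP x y : reflect (exists w, e x w /\ e y w) (~~ [disjoint nbhd e x & nbhd e y]).
Proof.
rewrite -setI_eq0; apply: (iffP (set0Pn _)) => [[w]|[w [H1 H2]]].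
  by rewrite !inE => /andP[H1 H2]; exists w.
by exists w; rewrite !inE H1 H2.
Qed.

Lemma hadjP x y : reflect (x <> y /\ exists w, e x w /\ e y w) (hadj x y).
Proof.
apply: (iffP andP) => [[/eqP H /commonP H2]|[/eqP H /commonP H2]]; by split.
Qed.

Lemma hadj_sym x y : hadj x y = hadj y x.
Proof. by rewrite /hadj eq_sym disjoint_sym. Qed.

Lemma hadj_irr x : hadj x x = false.
Proof. by rewrite /hadj eqxx. Qed.

Lemma packP (P : {set T}) : reflect (forall a b, a \in P -> b \in P -> ~~ hadj a b) (open_packing e P).
Proof.
apply: (iffP forall_inP) => [H a b Ha Hb | H a Ha].
  have /forall_inP/(_ b Hb) H1 := H a Ha. by rewrite /hadj; case: (a != b) H1 => //= ->.
apply/forall_inP => b Hb; apply/implyP => Hab.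
by have := H a b Ha Hb; rewrite /hadj Hab negbK.
Qed.

Lemma leafP x : leaf e x -> exists s, nbhd e x = [set s].
Proof. by rewrite /leaf /deg => /cards1P. Qed.

Lemma leaf_adj x s y : leaf e x -> e x s -> e x y -> y = s.
Proof.
case/leafP => w Hw Hs Hy.
have : s \in nbhd e x by rewrite inE.
have : y \in nbhd e x by rewrite inE.
by rewrite Hw !inE => /eqP -> /eqP ->.
Qed.

Lemma supP s : reflect (exists y, e s y /\ leaf e y) (Defs.support e s).
Proof. by apply: (iffP existsP) => [[y /andP[H1 H2]]|[y [H1 H2]]]; exists y; [split | apply/andP; split]. Qed.

Lemma max_ext (B : {set T}) : open_packing e B ->
  exists P, maximal_open_packing e P /\ B \subset P.
Proof.
move=> HB.
have HB' : open_packing e B && (B \subset B) by rewrite HB subxx.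
case: (@arg_maxnP _ B (fun Q : {set T} => open_packing e Q && (B \subset Q)) (fun Q : {set T} => #|Q|) HB') => P /andP[HP HBP] Hmax.
exists P; split => //.
rewrite /maximal_open_packing HP /=. apply/forallP => Q; apply/implyP => /andP[HQ HPQ].
have HQ' : open_packing e Q && (B \subset Q) by rewrite HQ (subset_trans HBP HPQ).
by rewrite eq_sym eqEcard HPQ /=; exact: (Hmax Q HQ').
Qed.

Lemma bigmin_le (I : eqType) (r : seq I) (Q : pred I) (F : I -> nat) x0 j :
  j \in r -> Q j -> \big[minn/x0]_(i <- r | Q i) F i <= F j.
Proof.
elim: r => // x r IH; rewrite inE big_cons => /orP [/eqP <- -> | Hj HQ].
  exact: geq_minl.
case: (Q x); last exact: IH.
exact: leq_trans (geq_minr _ _) (IH Hj HQ).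
Qed.

Lemma rhoL_le P : maximal_open_packing e P -> rho_oL e <= #|P|.
Proof. move=> HP; rewrite /rho_oL; apply: bigmin_le => //; exact: mem_index_enum. Qed.

Lemma rho_ge P : open_packing e P -> #|P| <= rho_o e.
Proof. move=> HP; rewrite /rho_o; exact: (@leq_bigmax_cond _ (fun Q : {set T} => open_packing e Q) (fun Q : {set T} => #|Q|) P HP). Qed.

Lemma EX (A : {set T}) x y z : in_U e -> open_packing e A ->
  x \notin A -> y \notin A -> z \notin A ->
  (forall a, a \in A -> ~~ hadj a x) -> (forall a, a \in A -> ~~ hadj a y) ->
  (forall a, a \in A -> ~~ hadj a z) ->
  hadj x y -> hadj x z -> ~~ hadj y z -> y != z ->
  (forall c, hadj y c -> c = x \/ hadj x c \/ exists2 a, a \in A & hadj a c) ->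
  (forall c, hadj z c -> c = x \/ hadj x c \/ exists2 a, a \in A & hadj a c) -> False.
Proof.
move=> HU HA xA yA zA Ax Ay Az Hxy Hxz Hyz Hyz' Cy Cz.
have HB : open_packing e (x |: A).
  apply/packP => a b; rewrite !inE => /orP[/eqP->|Ha] /orP[/eqP->|Hb].
  - by rewrite hadj_irr.
  - by rewrite hadj_sym Ax.
  - by rewrite Ax.
  - exact: (packP _ HA).
have [P [HP HBP]] := max_ext HB.
have HPp : open_packing e P by case/andP: HP.
have xP : x \in P by apply: (subsetP HBP); rewrite !inE eqxx.
have AP : forall a, a \in A -> a \in P by move=> a Ha; apply: (subsetP HBP); rewrite !inE Ha orbT.
have yP : y \notin P by apply/negP => Hy; have := packP _ HPp x y xP Hy; rewrite Hxy.
have zP : z \notin P by apply/negP => Hz; have := packP _ HPp x z xP Hz; rewrite Hxz.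
have key : forall w, (forall c, hadj w c -> c = x \/ hadj x c \/ exists2 a, a \in A & hadj a c) ->
    forall p, p \in P -> p != x -> ~~ hadj w p.
  move=> w Cw p Hp Hpx; apply/negP => Hwp.
  case: (Cw p Hwp) => [Hpx'|[Hxp|[a Ha Hap]]].
  - by rewrite Hpx' eqxx in Hpx.
  - by have := packP _ HPp x p xP Hp; rewrite Hxp.
  - have := packP _ HPp a p (AP a Ha) Hp; rewrite Hap. done.
set Q := y |: (z |: (P :\ x)).
have HQ : open_packing e Q.
  apply/packP => a b; rewrite !inE.
  have Hyy : ~~ hadj y y by rewrite hadj_irr.
  have Hzz : ~~ hadj z z by rewrite hadj_irr.
  move=> /or3P[/eqP->|/eqP->|/andP[Ha Ha']] /or3P[/eqP->|/eqP->|/andP[Hb Hb']] //.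
  all: try solve [ by rewrite hadj_sym | by apply: key | by rewrite hadj_sym; apply: key | by apply: (packP _ HPp) ].
have yQ : y \notin z |: (P :\ x) by rewrite !inE (negbTE Hyz') (negbTE yP) andbF.
have zQ : z \notin P :\ x by rewrite !inE (negbTE zP) andbF.
have HsQ : #|Q| = #|P|.+1.
  have HD : #|P| = (#|P :\ x|).+1 by rewrite (cardsD1 x P) xP.
  rewrite /Q (cardsU1 y) yQ (cardsU1 z) zQ HD. by [].
have H1 := rho_ge HQ. have H2 := rhoL_le HP.
move: HU; rewrite /in_U => HU. rewrite HU HsQ in H2 H1.
have := leq_trans H1 H2. by rewrite ltnn.
Qed.

Lemma hadj_of x y w : x != y -> e x w -> e y w -> hadj x y.
Proof. move=> H1 H2 H3; apply/hadjP; split; [exact/eqP | by exists w]. Qed.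

Lemma X_lemma s1 s2 w : in_U e -> Defs.support e s1 -> Defs.support e s2 -> e s1 w -> e s2 w -> s1 = s2.
Proof.
move=> HU /supP [l1 [H1 L1]] /supP [l2 [H2 L2]] Hw1 Hw2.
case: (eqVneq s1 s2) => // Hne; exfalso.
have E1 : e l1 s1 by rewrite e_sym. have E2 : e l2 s2 by rewrite e_sym.
have W1 : e w s1 by rewrite e_sym. have W2 : e w s2 by rewrite e_sym.
have nl : forall l s s', leaf e l -> e l s -> e l s' -> s = s'.
  move=> l s s' Ll Hs Hs'. by rewrite (leaf_adj Ll Hs Hs').
have A0 : open_packing e set0 by apply/packP => a b; rewrite inE.
apply: (@EX set0 w l1 l2) => //; try by [move=> a; rewrite inE | rewrite inE].
- apply: (hadj_of _ W1 E1). apply/eqP => Ewl. subst w. by rewrite (nl _ _ _ L1 E1 W2) eqxx in Hne.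
- apply: (hadj_of _ W2 E2). apply/eqP => Ewl. subst w. by rewrite (nl _ _ _ L2 W1 E2) eqxx in Hne.
- apply/negP => /hadjP [_ [m [Hm1 Hm2]]].
  by rewrite (nl _ _ _ L1 E1 Hm1) (nl _ _ _ L2 E2 Hm2) eqxx in Hne.
- apply/eqP => El; subst l2. by rewrite (nl _ _ _ L1 E1 E2) eqxx in Hne.
- move=> c /hadjP [_ [m [Hm1 Hm2]]]. have Em := nl _ _ _ L1 E1 Hm1. subst m.
  case: (eqVneq c w) => [->|Hcw]; [by left | right; left].
  apply: (hadj_of _ W1 Hm2). by rewrite eq_sym.
- move=> c /hadjP [_ [m [Hm1 Hm2]]]. have Em := nl _ _ _ L2 E2 Hm1. subst m.
  case: (eqVneq c w) => [->|Hcw]; [by left | right; left].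
  apply: (hadj_of _ W2 Hm2). by rewrite eq_sym.
Qed.

End Graph2.


Section Main.
Variables (T : finType) (e : rel T).
Hypothesis e_sym : symmetric e.
Hypothesis e_irr : irreflexive e.
Hypothesis gir : girth_at_least e 15.
Hypothesis HU : in_U e.
Hypothesis mind : forall x, 1 <= deg e x.
Variable v : T.
Hypothesis nbns : forall u, e v u -> ~~ Defs.support e u.

Notation Wv := (W e v).
Notation hadj := (hadj e).

Lemma nbr2 x w : ~~ leaf e x -> e x w -> exists y, e x y /\ y != w.
Proof.
move=> Hl Hw.
have H2 : 1 < #|nbhd e x| by have := mind x; move: Hl; rewrite /leaf /deg; lia.
have : 0 < #|nbhd e x :\ w| by move: H2; rewrite (cardsD1 w) inE Hw /=; lia.
case/card_gt0P => y; rewrite !inE => /andP[Hyw Hy]. by exists y.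
Qed.

Lemma find_qr c w : ((forall q, e c q -> q != w -> leaf e q) -> False) ->
  exists q r, [/\ e c q, q != w, e q r & r != c].
Proof.
move=> H.
case: (boolP [exists q, [&& e c q, q != w & ~~ leaf e q]]) => [/existsP [q /and3P[H1 H2 H3]] | Hn].
  have Hqc : e q c by rewrite e_sym.
  have [r [Hr1 Hr2]] := nbr2 H3 Hqc.
  by exists q, r.
exfalso; apply: H => q H1 H2. apply/negPn/negP => H3.
by move/existsP: Hn; apply; exists q; rewrite H1 H2 H3.
Qed.

Lemma sstarP s : single_star_support e s -> Defs.support e s /\ forall t, e s t -> ~~ Defs.support e t.
Proof. by case/andP => H /forallP H2; split => // t; move/implyP: (H2 t). Qed.

Lemma nsstar s : Defs.support e s -> ~~ single_star_support e s -> exists t, e s t /\ Defs.support e t.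
Proof.
move=> Hs; rewrite /single_star_support Hs /= negb_forall => /existsP [t].
by rewrite negb_imply negbK => /andP[]; exists t.
Qed.

Ltac wsolve := rewrite /W /=; repeat (apply/andP; split); try done;
  try (by rewrite eq_sym); try (by rewrite e_sym).

Definition KU u s c r := [exists w, exists q, [&& e s w, w != u, e w c, c != s, e c q, q != w, e q r & r != c]].
Definition shellU u s c := [exists w, [&& e s w, w != u, e w c & c != s]].

Lemma KU_walk u s c r : e v u -> e u s -> v != s -> KU u s c r ->
  exists w q, Wv [:: u; s; w; c; q; r] /\ hadj r c.
Proof.
move=> H1 H2 H3 /existsP[w /existsP[q]].
move=> /andP[Hsw /andP[Hwu /andP[Hwc /andP[Hcs /andP[Hcq /andP[Hqw /andP[Hqr Hrc]]]]]]].
exists w, q; split; first by wsolve.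
apply: (hadj_of Hrc _ Hcq). by rewrite e_sym.
Qed.

Lemma Kside u s c : single_star_support e s -> shellU u s c -> exists r, KU u s c r.
Proof.
move=> Ss /existsP [w /and4P[Hsw Hwu Hwc Hcs]].
have [Sups Nbs] := sstarP Ss.
have Hnot : (forall q, e c q -> q != w -> leaf e q) -> False.
  move=> Hall.
  have Hcw : e c w by rewrite e_sym.
  have Hcl : ~~ leaf e c.
    apply/negP => Lc. have Sw : Defs.support e w by apply/supP; exists c.
    by rewrite (negbTE (Nbs w Hsw)) in Sw.
  have [y [Hcy Hyw]] := nbr2 Hcl Hcw.
  have Sc : Defs.support e c by apply/supP; exists y; split => //; exact: (Hall y Hcy Hyw).
  have := X_lemma e_sym HU Sc Sups Hcw Hsw. by move=> Ecs; rewrite Ecs eqxx in Hcs.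
have [q [r [Hcq Hqw Hqr Hrc]]] := find_qr Hnot.
by exists r; apply/existsP; exists w; apply/existsP; exists q; rewrite Hsw Hwu Hwc Hcs Hcq Hqw Hqr Hrc.
Qed.

Lemma uniq_case s1 s2 u1 u2 : single_star_support e s1 -> single_star_support e s2 ->
  e v u1 -> e u1 s1 -> e v u2 -> e u2 s2 -> v != s1 -> v != s2 -> s1 = s2.
Proof.
move=> S1 S2 Hv1 H1 Hv2 H2 N1 N2.
case: (eqVneq s1 s2) => // Hne; exfalso.
have [Sup1 Nb1] := sstarP S1. have [Sup2 Nb2] := sstarP S2.
pose Shell c := shellU u1 s1 c || shellU u2 s2 c.
pose Kb c r := KU u1 s1 c r || KU u2 s2 c r.
have Kne : forall c, Shell c -> exists r, Kb c r.
  move=> c /orP [H|H].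
    by have [r Hr] := Kside S1 H; exists r; rewrite /Kb Hr.
  by have [r Hr] := Kside S2 H; exists r; rewrite /Kb Hr orbT.
have [f fK] : exists f : T -> T, forall c, Shell c -> Kb c (f c).
  exists (fun c => if [pick r | Kb c r] is Some r then r else c).
  move=> c Hc; case: pickP => // H.
  by case: (Kne c Hc) => r; rewrite H.
have Kwalk : forall c r, Kb c r -> exists u s w q,
    [/\ Wv [:: u; s; w; c; q; r], hadj r c & (s = s1 \/ s = s2)].
  move=> c r /orP [H|H].
    by have [w [q [HW Hh]]] := KU_walk Hv1 H1 N1 H; exists u1, s1, w, q; split => //; left.
  by have [w [q [HW Hh]]] := KU_walk Hv2 H2 N2 H; exists u2, s2, w, q; split => //; right.
pose A := f @: [set c | Shell c].
have Amem : forall a, a \in A -> exists c, Shell c /\ a = f c.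
  by move=> a /imsetP [c]; rewrite inE => Hc ->; exists c.
have WB0 : Wv [::] by [].
have WB1 : Wv [:: u1; s1] by wsolve.
have WB2 : Wv [:: u2; s2] by wsolve.
have far : forall pb a, Wv pb -> size pb <= 2 -> a \in A ->
    (last v pb != a) /\ (forall p, e (last v pb) p -> e a p -> False).
  move=> pb a Hb Hs /Amem [c [Hc ->]].
  have [u [s [w [q [HW _ _]]]]] := Kwalk c _ (fK c Hc).
  have H3 : size pb + 3 <= size [:: u; s; w; c; q; f c] by rewrite /=; move: Hs; clear; lia.
  have H4 : size pb + size [:: u; s; w; c; q; f c] + 2 < 15 by rewrite /=; move: Hs; clear; lia.
  exact: (W_far e_sym e_irr gir Hb HW H3 H4).
have farH : forall pb a, Wv pb -> size pb <= 2 -> a \in A -> ~~ hadj a (last v pb).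
  move=> pb a Hb Hs Ha; apply/negP => /hadjP [_ [p [Hp1 Hp2]]].
  by have [_ ] := far pb a Hb Hs Ha; apply; eauto.
have farN : forall pb, Wv pb -> size pb <= 2 -> last v pb \notin A.
  move=> pb Hb Hs; apply/negP => Ha. have [H _] := far pb _ Hb Hs Ha. by rewrite eqxx in H.
apply: (@EX _ _ A v s1 s2 HU).
- apply/packP => a b Ha Hb; apply/negP => /hadjP [Hab [p [Hp1 Hp2]]].
  have [c [Hc Ec]] := Amem a Ha. have [c' [Hc' Ec']] := Amem b Hb.
  have [u [s [w [q [HW _ _]]]]] := Kwalk c _ (fK c Hc).
  have [u' [s' [w' [q' [HW' _ _]]]]] := Kwalk c' _ (fK c' Hc').
  rewrite -Ec in HW. rewrite -Ec' in HW'.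
  have := W_pair e_sym e_irr gir (pc := [:: u; s; w; c]) (pc' := [:: u'; s'; w'; c']) HW HW' erefl erefl Hp1 Hp2.
  move=> H. have {}H := H (introN eqP Hab). case: H => _ _ _ Ecc. apply: Hab. by rewrite Ec Ec' Ecc.
- exact: (farN [::]).
- exact: (farN [:: u1; s1]).
- exact: (farN [:: u2; s2]).
- move=> a Ha; exact: (farH [::]).
- move=> a Ha; exact: (farH [:: u1; s1]).
- move=> a Ha; exact: (farH [:: u2; s2]).
- apply: (hadj_of N1 Hv1). by rewrite e_sym.
- apply: (hadj_of N2 Hv2). by rewrite e_sym.
- apply/negP => /hadjP [_ [m [Hm1 Hm2]]]. by rewrite (X_lemma e_sym HU Sup1 Sup2 Hm1 Hm2) eqxx in Hne.
- exact: Hne.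
- move=> c /hadjP [Hsc [w [Hw1 Hw2]]].
  case: (eqVneq w u1) => [Ew|Hwu].
    subst w. case: (eqVneq c v) => [->|Hcv]; [by left|right; left].
    apply: (hadj_of _ Hv1 Hw2). by rewrite eq_sym.
  right; right.
  have Hc : Shell c.
    apply/orP; left; apply/existsP; exists w. rewrite Hw1 Hwu /= e_sym Hw2 /= eq_sym. exact/eqP.
  exists (f c); first by apply/imsetP; exists c; rewrite ?inE.
  by have [u [s [w' [q [_ Hh _]]]]] := Kwalk c _ (fK c Hc).
- move=> c /hadjP [Hsc [w [Hw1 Hw2]]].
  case: (eqVneq w u2) => [Ew|Hwu].
    subst w. case: (eqVneq c v) => [->|Hcv]; [by left|right; left].
    apply: (hadj_of _ Hv2 Hw2). by rewrite eq_sym.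
  right; right.
  have Hc : Shell c.
    apply/orP; right; apply/existsP; exists w. rewrite Hw1 Hwu /= e_sym Hw2 /= eq_sym. exact/eqP.
  exists (f c); first by apply/imsetP; exists c; rewrite ?inE.
  by have [u [s [w' [q [_ Hh _]]]]] := Kwalk c _ (fK c Hc).
Qed.

Lemma W4P x1 x2 x3 x4 : Wv [:: x1; x2; x3; x4] ->
  [/\ e v x1, e x1 x2, e x2 x3 & e x3 x4] /\ [/\ v != x2, x1 != x3 & x2 != x4].
Proof.
rewrite /W /= => /andP[/andP[H1 /andP[H2 /andP[H3 /andP[H4 _]]]] /andP[N1 /andP[N2 /andP[N3 _]]]].
by split.
Qed.

Lemma exist_case s u :
  (forall c u', e v u' -> e u' c -> c != v -> ~~ e v c -> single_star_support e c -> False) ->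
  Defs.support e s -> e v u -> e u s -> s != v -> ~~ e v s -> False.
Proof.
move=> Hall Ss Hvu Hus Hsv Hvs.
have NSs : ~~ single_star_support e s by apply/negP; apply: (Hall s u).
have [t [Hst St]] := nsstar Ss NSs.
have /supP [m [Htm Lm]] := St.
have Hvt : ~~ e v t by apply/negP => H; have := nbns H; rewrite St.
have Hut : u != t by apply/eqP => E; subst t; by rewrite Hvu in Hvt.
have Hsm : s != m.
  apply/eqP => E; subst m. have Hsu : e s u by rewrite e_sym.
  have Hts : e s t by [].
  by rewrite (leaf_adj Lm Hsu Hts) eqxx in Hut.
have Wm : Wv [:: u; s; t; m] by wsolve.
have Wu : Wv [:: u] by wsolve.
have Wus : Wv [:: u; s] by wsolve.
have Wust : Wv [:: u; s; t] by wsolve.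
have Hmt : e m t by rewrite e_sym.
have mt : forall p, e m p -> p = t by move=> p Hp; exact: (leaf_adj Lm Hmt Hp).
pose Shell c := [exists u', [&& e v u', u' != u, e u' c & c != v]].
pose Kb c r := [exists u', exists q, [&& e v u', u' != u, e u' c, c != v, e c q, q != u', e q r & r != c]].
have Kne : forall c, Shell c -> exists r, Kb c r.
  move=> c /existsP [u' /and4P[Hvu' Hu'u Hu'c Hcv]].
  have Hcu' : e c u' by rewrite e_sym.
  have Hvc : ~~ e v c.
    apply/negP => Hvc.
    have W1' : Wv [:: c] by wsolve.
    have W2' : Wv [:: u'; c] by wsolve.
    by have := UWs e_sym e_irr gir W1' W2' erefl erefl.
  have Hcl : ~~ leaf e c.
    apply/negP => Lc. have Su' : Defs.support e u' by apply/supP; exists c.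
    by rewrite (negbTE (nbns Hvu')) in Su'.
  have Hnot : (forall q, e c q -> q != u' -> leaf e q) -> False.
    move=> Hl.
    have [y [Hcy Hyu']] := nbr2 Hcl Hcu'.
    have Sc : Defs.support e c by apply/supP; exists y; split => //; exact: (Hl y Hcy Hyu').
    have NSc : ~~ single_star_support e c by apply/negP; apply: (Hall c u').
    have [t' [Hct' St']] := nsstar Sc NSc.
    have Ht'u' : t' != u' by apply/eqP => E; subst t'; have := nbns Hvu'; rewrite St'.
    have Lt' := Hl t' Hct' Ht'u'.
    have /supP [z [Ht'z Lz]] := St'.
    have Ht'c : e t' c by rewrite e_sym.
    have Ezc : z = c by exact: (leaf_adj Lt' Ht'c Ht'z).
    by subst z; rewrite Lz in Hcl.
  have [q [r [Hcq Hqw Hqr Hrc]]] := find_qr Hnot.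
  exists r; apply/existsP; exists u'; apply/existsP; exists q.
  by rewrite Hvu' Hu'u Hu'c Hcv Hcq Hqw Hqr Hrc.
have [f fK] : exists f : T -> T, forall c, Shell c -> Kb c (f c).
  exists (fun c => if [pick r | Kb c r] is Some r then r else c).
  move=> c Hc; case: pickP => // H.
  by case: (Kne c Hc) => r; rewrite H.
have Kwalk : forall c r, Kb c r -> exists u' q,
    [/\ Wv [:: u'; c; q; r], hadj r c & u' != u].
  move=> c r /existsP[u' /existsP[q]].
  move=> /andP[Hvu' /andP[Hu'u /andP[Hu'c /andP[Hcv /andP[Hcq /andP[Hqw /andP[Hqr Hrc]]]]]]].
  exists u', q; split => //; first by wsolve.
  apply: (hadj_of Hrc _ Hcq). by rewrite e_sym.
pose A := f @: [set c | Shell c].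
have Amem : forall a, a \in A -> exists c, Shell c /\ a = f c.
  by move=> a /imsetP [c]; rewrite inE => Hc ->; exists c.
have Awalk : forall a, a \in A -> exists u' c q, Wv [:: u'; c; q; a] /\ u' != u.
  move=> a /Amem [c [Hc ->]].
  have [u' [q [HW _ Hu']]] := Kwalk c _ (fK c Hc). by exists u', c, q.
have inj3 : forall (a b c a' b' c' : T), [:: a; b; c] = [:: a'; b'; c'] -> a = a'.
  by move=> ? ? ? ? ? ? [].
have inj4 : forall (a b c d a' b' c' d' : T), [:: a; b; c; d] = [:: a'; b'; c'; d'] -> a = a'.
  by move=> ? ? ? ? ? ? ? ? [].
have As : forall a, a \in A -> (a != s) /\ ~~ hadj a s.
  move=> a /Awalk [u' [c [q [HW Hu']]]].
  have [[? ? ? ?] [? ? ?]] := W4P HW.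
  split.
    apply/eqP => E; subst a.
    by have := UWs e_sym e_irr gir Wus HW erefl erefl.
  apply/negP => /hadjP [_ [p [Hap Hsp]]].
  case: (eqVneq p u) => [Epu|Hpu]; case: (eqVneq p q) => [Epq|Hpq].
  - subst p q. have W3 : Wv [:: u'; c; u] by wsolve.
    by have := UWs e_sym e_irr gir Wu W3 erefl erefl.
  - subst p. have W5 : Wv [:: u'; c; q; a; u] by wsolve.
    by have := UWs e_sym e_irr gir Wu W5 erefl erefl.
  - subst p. have W3 : Wv [:: u'; c; q] by wsolve.
    have W3' : Wv [:: u; s; q] by wsolve.
    have := UWs e_sym e_irr gir W3' W3 erefl erefl. move/inj3 => E. by rewrite E eqxx in Hu'.
  - have W5 : Wv [:: u'; c; q; a; p] by wsolve.
    have W3' : Wv [:: u; s; p] by wsolve.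
    by have := UWs e_sym e_irr gir W3' W5 erefl erefl.
have Am : forall a, a \in A -> (a != m) /\ ~~ hadj a m.
  move=> a /Awalk [u' [c [q [HW Hu']]]].
  have [[? ? ? ?] [? ? ?]] := W4P HW.
  split.
    apply/eqP => E; subst a.
    have := UWs e_sym e_irr gir Wm HW erefl erefl. move/inj4 => E. by rewrite E eqxx in Hu'.
  apply/negP => /hadjP [_ [p [Hap Hmp]]].
  have Ept := mt p Hmp. subst p.
  case: (eqVneq t q) => [Etq|Htq].
  - subst t. have W3 : Wv [:: u'; c; q] by wsolve.
    have := UWs e_sym e_irr gir Wust W3 erefl erefl. move/inj3 => E. by rewrite E eqxx in Hu'.
  - have W5 : Wv [:: u'; c; q; a; t] by wsolve.
    by have := UWs e_sym e_irr gir Wust W5 erefl erefl.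
have Av : forall a, a \in A -> (a != v) /\ ~~ hadj a v.
  move=> a /Awalk [u' [c [q [HW Hu']]]].
  have [[? ? ? ?] [? ? ?]] := W4P HW.
  have W0 : Wv [::] by [].
  have [H1 H2] := W_far e_sym e_irr gir W0 HW isT isT.
  split; first by rewrite eq_sym.
  by apply/negP => /hadjP [_ [p [Hap Hvp]]]; apply: (H2 p).
apply: (@EX _ _ A s m v HU).
- apply/packP => a b Ha Hb; apply/negP => /hadjP [Hab [p [Hp1 Hp2]]].
  have [c [Hc Ec]] := Amem a Ha. have [c' [Hc' Ec']] := Amem b Hb.
  have [u' [q [HW _ _]]] := Kwalk c _ (fK c Hc).
  have [u'' [q' [HW' _ _]]] := Kwalk c' _ (fK c' Hc').
  rewrite -Ec in HW. rewrite -Ec' in HW'.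
  have := W_pair e_sym e_irr gir (pc := [:: u'; c]) (pc' := [:: u''; c']) HW HW' erefl erefl Hp1 Hp2.
  move=> H. have {}H := H (introN eqP Hab). case: H => _ Ecc. apply: Hab. by rewrite Ec Ec' Ecc.
- by apply/negP => H; have [] := As _ H; rewrite eqxx.
- by apply/negP => H; have [] := Am _ H; rewrite eqxx.
- by apply/negP => H; have [] := Av _ H; rewrite eqxx.
- by move=> a Ha; have [] := As _ Ha.
- by move=> a Ha; have [] := Am _ Ha.
- by move=> a Ha; have [] := Av _ Ha.
- apply: (hadj_of Hsm Hst). by rewrite e_sym.
- apply: (hadj_of Hsv _ Hvu). by rewrite e_sym.
- apply/negP => /hadjP [_ [p [Hmp Hvp]]]. have Ept := mt p Hmp. subst p. by rewrite Hvp in Hvt.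
- apply/eqP => E; subst m. by rewrite e_sym Htm in Hvt.
- move=> c /hadjP [Hmc [p [Hmp Hcp]]]. have Ept := mt p Hmp. subst p.
  case: (eqVneq c s) => [->|Hcs]; [by left|right; left].
  apply: (hadj_of _ Hst Hcp). by rewrite eq_sym.
- move=> c /hadjP [Hvc [w [Hw1 Hw2]]].
  case: (eqVneq w u) => [Ew|Hwu].
    subst w. case: (eqVneq c s) => [->|Hcs]; [by left|right; left].
    apply: (hadj_of _ _ Hw2). by rewrite eq_sym. by rewrite e_sym.
  right; right.
  have Hc : Shell c.
    apply/existsP; exists w. rewrite Hw1 Hwu /= e_sym Hw2 /= eq_sym. exact/eqP.
  exists (f c); first by apply/imsetP; exists c; rewrite ?inE.
  by have [u' [q [_ Hh _]]] := Kwalk c _ (fK c Hc).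
Qed.

End Main.


Theorem lemma6 (T : finType) (e : rel T) (e_sym : symmetric e) (e_irr : irreflexive e) :
  connected_graph e -> min_deg_one e -> girth_at_least e 15 -> in_U e ->
  forall v : T, dist_to_supports_is e v 2 ->
  exists! s : T, single_star_support e s /\ dist_is e v s 2.
Proof.
move=> _ [mind _] gir HU v [[s0 [Ss0 D0]] Hns].
have nbns : forall u, e v u -> ~~ Defs.support e u.
  move=> u Hvu; apply/negP => Su. apply: (Hns u Su 1 erefl).
  by exists [:: u]; rewrite /= Hvu eqxx.
have dist_of : forall s u, e v u -> e u s -> s != v -> ~~ e v s -> dist_is e v s 2.
  move=> s u Hvu Hus Hsv Hvs; split.
    by exists [:: u; s]; rewrite /= Hvu Hus !eqxx.
  move=> m Hm [p /and3P[Hp Hl Hs]].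
  case: m Hm Hs => [|[|m]] // _.
    case: p Hp Hl => // _ /= /eqP E. by rewrite E eqxx in Hsv.
  case: p Hp Hl => [|y [|z p]] //= /andP[Hvy _] /eqP E. by rewrite -E Hvy in Hvs.
have dist_to : forall s, dist_is e v s 2 -> exists u, [/\ e v u, e u s, s != v & ~~ e v s].
  move=> s [[p /and3P[Hp Hl Hs]] Hm].
  case: p Hp Hl Hs => [|a [|b [|? ?]]] //= /andP[Hva /andP[Hab _]] /eqP Ebs _.
  subst b. exists a; split => //.
    apply/eqP => E; subst s. apply: (Hm 0 erefl). by exists [::]; rewrite /= eqxx.
  apply/negP => Hvs. apply: (Hm 1 erefl). by exists [:: s]; rewrite /= Hvs eqxx.
case: (boolP [exists s, [exists u, [&& e v u, e u s, s != v, ~~ e v s & single_star_support e s]]]).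
  move=> /existsP [s /existsP [u /and5P[Hvu Hus Hsv Hvs Ss]]].
  exists s; split; first by split => //; exact: (dist_of s u).
  move=> s' [Ss' D']. have [u' [Hvu' Hus' Hsv' Hvs']] := dist_to s' D'.
  apply: (uniq_case e_sym e_irr gir HU mind Ss Ss' Hvu Hus Hvu' Hus'); by rewrite eq_sym.
move=> Hn; exfalso.
have [u0 [Hvu0 Hus0 Hsv0 Hvs0]] := dist_to s0 D0.
apply: (exist_case e_sym e_irr gir HU mind nbns (s := s0) (u := u0) _ Ss0 Hvu0 Hus0 Hsv0 Hvs0).
move=> c u' H1 H2 H3 H4 H5. move/existsP: Hn; apply; exists c; apply/existsP; exists u'.
by rewrite H1 H2 H3 H4 H5.
Qed.
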